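(* (a) If $\chi,\chi'\in M_{\mathbb{R}}$ differ by a real multiple of $\tau_d$, then $(r,p)(\chi)=(r,p)(\chi')$. (b) Let $\chi\in M$ be a weight, let $w\in\mathfrak{S}_d$, and let $\delta\in M_{\mathbb{R}}^{\mathfrak{S}_d}$ be a Weyl-invariant real weight. Then \[(r,p)(\chi+\rho+\delta)=(r,p)(w*\chi+\rho+\delta),\] where $w*\chi:=w(\chi+\rho)-\rho$.
   Context: Let $Q=(I,E)$ be a symmetric quiver (for all $i,j\in I$ the number of arrows $i\to j$ equals the number of arrows $j\to i$), with source and target maps $s,t:E\to I$. Fix $d=(d_i)_{i\in I}\in\mathbb{N}^I$. Let $R(d)=\bigoplus_{a\in E}\mathrm{Hom}(\mathbb{C}^{d_{s(a)}},\mathbb{C}^{d_{t(a)}})$ with $G(d)=\prod_{i\in I}GL(d_i)$ acting by conjugation. Standing assumption: the subquiver $Q^d$ of $Q$ with vertex set $\{i\in I: d_i\neq 0\}$ is connected and is not the quiver with one vertex and no arrows. Let $T(d)$ be the diagonal maximal torus, with weight lattice $M=\bigoplus_{i\in I,1\le j\le d_i}\mathbb{Z}\beta^i_j$ and $M_{\mathbb{R}}=M\otimes\mathbb{R}$. Let $\mathcal{W}$ be the multiset of $T(d)$-weights of $R(d)$: for each arrow $a:i\to j$ and each $1\le x\le d_i$, $1\le y\le d_j$, the weight $\beta^j_y-\beta^i_x$. Let $\tau_d:=\big(\sum_{i,j}\beta^i_j\big)/\big(\sum_i d_i\big)$. Define the region $\mathbb{W}:=\sum_{\beta\in\mathcal{W}}[0,\beta]+\mathbb{R}\tau_d\subset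 M_{\mathbb{R}}$ (Minkowski sum, one segment for each element of the multiset). For $\chi\in M_{\mathbb{R}}$, the $r$-invariant $r(\chi)$ is the smallest real $r\ge 0$ with $\chi\in r\mathbb{W}$. If $r(\chi)=r$, then $\chi=\sum_{\beta\in\mathcal{W}}c_\beta\beta+c\tau_d$ with $c\in\mathbb{R}$ and $-r\le c_\beta\le 0$ (one coefficient for each element of the multiset); the $p$-invariant $p(\chi)$ is the smallest number of coefficients $c_\beta$ equal to $-r$ among all such expressions, and $(r,p)(\chi):=(r(\chi),p(\chi))$. The Weyl group $\mathfrak{S}_d=\prod_{i\in I}\mathfrak{S}_{d_i}$ acts on $M_{\mathbb{R}}$ by $w\cdot\beta^i_j=\beta^i_{w^i(j)}$; $M_{\mathbb{R}}^{\mathfrak{S}_d}$ denotes the invariants. The positive roots of $G(d)$ are $\beta^i_a-\beta^i_b$ for $i\in I$ and $a<b$, and $\rho$ is half their sum. *)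

(* Defs.v *)
From HB Require Import structures.
From mathcomp Require Import all_boot all_order all_algebra all_fingroup.
From mathcomp Require Import boolp classical_sets reals.
Unset Printing Implicit Defensive.
Import Order.TTheory GRing.Theory Num.Theory.
Local Open Scope ring_scope.

(* Least natural number satisfying a (classical) predicate; 0 if none. *)
Definition nat_min (P : nat -> Prop) : nat :=
  match pselect (exists n, `[< P n >]) with
  | left ex => ex_minn ex
  | right _ => 0%N
  end.

Section QuiverWeights.
Variables (R : realType) (I E : finType) (s t : E -> I) (d : I -> nat).

Definition symmetric_quiver : Prop :=
  forall i j : I, #|[set a | (s a == i) && (t a == j)]| = #|[set a | (s a == j) && (t a == i)]|.

(* Standing assumption on Q^d: vertices {i | d i != 0}. *)
Definition Qd_adj : rel I :=
  fun i j => [&& d i != 0%N, d j != 0%N & [exists a, (s a == i) && (t a == j)]].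

Definition standing_assumption : Prop :=
  [/\ exists i, d i != 0%N,
      (forall i j, d i != 0%N -> d j != 0%N -> connect Qd_adj i j) &
      ~ (#|[set i | d i != 0%N]| = 1%N /\
         forall a, ~ (d (s a) != 0%N /\ d (t a) != 0%N))].

(* Index set of the basis beta^i_j of M, 0-indexed j < d i. *)
Definition Kidx := {i : I & 'I_(d i)}.
(* M_R = functions Kidx -> R (coordinates in the basis beta^i_j). *)
Definition MR := Kidx -> R.

Definition basis (i : I) (j : 'I_(d i)) : MR :=
  fun k => if k == Tagged (fun i => 'I_(d i)) j then 1 else 0.

(* Index set of the multiset of weights of R(d): (a, x, y). *)
Definition Widx := {a : E & ('I_(d (s a)) * 'I_(d (t a)))%type}.

Definition wt (b : Widx) : MR :=
  fun k => basis (t (tag b)) (tagged b).2 k - basis (s (tag b)) (tagged b).1 k.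

Definition tau_d : MR :=
  fun k => (\sum_(i : I) \sum_(j : 'I_(d i)) basis i j k) / (\sum_(i : I) d i)%:R.

Definition in_W (x : MR) : Prop :=
  exists (l : Widx -> R) (c : R),
    (forall b, 0 <= l b <= 1) /\
    forall k, x k = \sum_(b : Widx) l b * wt b k + c * tau_d k.

Definition r_inv (chi : MR) : R :=
  inf [set r : R | 0 <= r /\ exists w : MR, in_W w /\ forall k, chi k = r * w k].

Definition p_inv (chi : MR) : nat :=
  let r := r_inv chi in
  nat_min (fun n => exists (c : Widx -> R) (c0 : R),
    [/\ forall b, - r <= c b <= 0,
        forall k, chi k = \sum_(b : Widx) c b * wt b k + c0 * tau_d k &
        #|[set b | c b == - r]| = n]).

(* Weyl group S_d = prod_i S_{d i}; action w . beta^i_j = beta^i_{w^i j} *)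
Definition weyl_act (w : forall i : I, {perm 'I_(d i)}) (chi : MR) : MR :=
  fun k => chi (Tagged (fun i => 'I_(d i)) (((w (tag k))^-1)%g (tagged k))).

Definition weyl_invariant (delta : MR) : Prop :=
  forall w : (forall i : I, {perm 'I_(d i)}), forall k, weyl_act w delta k = delta k.

(* rho = half the sum of positive roots beta^i_a - beta^i_b, a < b *)
Definition rho : MR :=
  fun k => 2^-1 * \sum_(i : I) \sum_(a : 'I_(d i)) \sum_(b : 'I_(d i) | (a < b)%N)
             (basis i a k - basis i b k).

Definition dot_act (w : forall i : I, {perm 'I_(d i)}) (chi : MR) : MR :=
  fun k => weyl_act w (fun k' => chi k' + rho k') k - rho k.

End QuiverWeights.

(* Main.v *)
Require Import Defs.
From HB Require Import structures.
From mathcomp Require Import all_boot all_order all_algebra all_fingroup.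
From mathcomp Require Import boolp classical_sets reals.
From mathcomp Require Import lra.
Import Order.TTheory GRing.Theory Num.Theory.
Local Open Scope ring_scope.

Section Proofs.
Variables (R : realType) (I E : finType) (s t : E -> I) (d : I -> nat).
Local Notation MR := (MR R I d).
Local Notation K := (Kidx I d).
Local Notation W := (Widx I E s t d).
Local Notation wt := (wt R I E s t d).
Local Notation tau := (tau_d R I d).
Local Notation inW := (in_W R I E s t d).
Local Notation rinv := (r_inv R I E s t d).
Local Notation pinv := (p_inv R I E s t d).

Definition Sr (chi : MR) : set R :=
  [set r | 0 <= r /\ exists w : MR, inW w /\ forall k, chi k = r * w k].

Lemma rinvE chi : rinv chi = inf (Sr chi). Proof. by []. Qed.

Definition Pp (r : R) (chi : MR) (n : nat) : Prop :=
  exists (c : W -> R) (c0 : R),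
    [/\ forall b, - r <= c b <= 0,
        forall k, chi k = \sum_(b : W) c b * wt b k + c0 * tau k &
        #|[set b | c b == - r]| = n].

Lemma pinvE chi : pinv chi = nat_min (Pp (rinv chi) chi). Proof. by []. Qed.

Lemma nat_min_ext (P Q : nat -> Prop) : (forall n, P n <-> Q n) -> nat_min P = nat_min Q.
Proof.
move=> H; have -> : P = Q by apply: funext => n; apply: propext; exact: H.
by [].
Qed.

Lemma Sr_up chi r r' : Sr chi r -> r <= r' -> Sr chi r'.
Proof.
move=> [r0 [w [[l [c [Hl Hw]]] Hchi]]] Hrr'.
have r'0 : 0 <= r' by apply: le_trans Hrr'.
case: (eqVneq r' 0) => [r'E|r'n0].
  have r0' : r = 0 by apply/eqP; rewrite eq_le r0 andbT -r'E.
  split => //; exists w; split; first by exists l, c.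
  by move=> k; rewrite Hchi r0' r'E.
have r'p : 0 < r' by rewrite lt0r r'n0 r'0.
set q := r / r'.
have q0 : 0 <= q by rewrite divr_ge0.
have q1 : q <= 1 by rewrite ler_pdivrMr // mul1r.
split => //; exists (fun k => q * w k); split.
  exists (fun b => q * l b), (q * c); split.
    move=> b; case/andP: (Hl b) => l0 l1; rewrite mulr_ge0 //=.
    by rewrite mulr_ile1.
  move=> k; rewrite Hw mulrDr mulr_sumr; congr (_ + _); last by rewrite mulrA.
  by apply: eq_bigr => b _; rewrite mulrA.
by move=> k; rewrite Hchi /q mulrA [r' * _]mulrCA divff // mulr1.
Qed.

Lemma inf_le_pos (S S' : set R) :
  (exists r, S r) -> (exists r, S' r) ->
  (forall r, S r -> 0 <= r) -> (forall r, S' r -> 0 <= r) ->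
  (forall r r', S' r -> r <= r' -> S' r') ->
  (forall r, 0 < r -> S' r -> S r) -> inf S <= inf S'.
Proof.
move=> [r Sr0] [r' Sr'] S0 S'0 S'up tr.
have hl : has_lbound S by exists 0 => y /S0.
apply: lb_le_inf; first by exists r'.
move=> y Sy.
have := S'0 _ Sy; rewrite le0r => /orP [/eqP y0|yp]; last first.
  by apply: (ge_inf hl); apply: tr.
rewrite y0 leNgt; apply/negP => ip.
have : S (inf S / 2).
  apply: tr; first by rewrite divr_gt0.
  by apply: (S'up y) => //; rewrite y0 divr_ge0 // ltW.
move/(ge_inf hl); rewrite ler_pdivlMr //; lra.
Qed.

Lemma inf_eq_pos (S S' : set R) :
  (forall r, S r -> 0 <= r) -> (forall r, S' r -> 0 <= r) ->
  (forall r r', S r -> r <= r' -> S r') -> (forall r r', S' r -> r <= r' -> S' r') ->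
  (forall r, 0 < r -> S r -> S' r) -> (forall r, 0 < r -> S' r -> S r) ->
  inf S = inf S'.
Proof.
move=> S0 S'0 Sup S'up t1 t2.
case: (pselect (exists r, S r)) => [[r Sr0]|nS].
  have ne' : exists r, S' r.
    exists (r + 1); apply: t1; first by apply: (lt_le_trans ltr01); rewrite lerDr S0.
    by apply: Sup Sr0 _; rewrite lerDl.
  apply/eqP; rewrite eq_le; apply/andP; split; apply: inf_le_pos => //; by exists r.
case: (pselect (exists r, S' r)) => [[r Sr0]|nS'].
  exfalso; apply: nS; exists (r + 1); apply: t2; first by apply: (lt_le_trans ltr01); rewrite lerDr S'0.
  by apply: S'up Sr0 _; rewrite lerDl.
have -> : S = S'.
  apply: funext => r; apply: propext; split => H; [exfalso; apply: nS|exfalso; apply: nS']; by exists r.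
by [].
Qed.


Lemma Sr_shift chi chi' c : (forall k, chi' k = chi k + c * tau k) ->
  forall r, 0 < r -> Sr chi r -> Sr chi' r.
Proof.
move=> Hc r rp [r0 [w [[l [c0 [Hl Hw]]] Hchi]]].
split => //; exists (fun k => w k + c / r * tau k); split.
  exists l, (c0 + c / r); split => // k; by rewrite Hw mulrDl addrA.
move=> k; rewrite Hc Hchi mulrDr; congr (_ + _); have HH : forall z : R, r * (c / r * z) = c * z.
  by move=> z; rewrite mulrA mulrCA divff ?mulr1 // gt_eqF.
by rewrite HH.
Qed.

Lemma part_a chi chi' c : (forall k, chi' k = chi k + c * tau k) ->
  rinv chi = rinv chi' /\ pinv chi = pinv chi'.
Proof.
move=> Hc.
have Hc' : forall k, chi k = chi' k + (- c) * tau k by move=> k; rewrite Hc mulNr addrK.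
have Hr : rinv chi = rinv chi'.
  rewrite !rinvE; apply: inf_eq_pos.
  - by move=> r [].
  - by move=> r [].
  - exact: Sr_up.
  - exact: Sr_up.
  - exact: Sr_shift Hc.
  - exact: Sr_shift Hc'.
split => //; rewrite !pinvE -Hr; apply: nat_min_ext => n; split.
  move=> [cc [c0 [H1 H2 H3]]]; exists cc, (c0 + c); split => // k.
  by rewrite Hc H2 mulrDl addrA.
move=> [cc [c0 [H1 H2 H3]]]; exists cc, (c0 - c); split => // k.
by rewrite Hc' H2 mulrDl addrA mulNr.
Qed.

Section Weyl.
Variable w : forall i : I, {perm 'I_(d i)}.

Definition phi (b : W) : W :=
  Tagged (fun a => ('I_(d (s a)) * 'I_(d (t a)))%type)
    (w (s (tag b)) (tagged b).1, w (t (tag b)) (tagged b).2).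
Definition phi' (b : W) : W :=
  Tagged (fun a => ('I_(d (s a)) * 'I_(d (t a)))%type)
    (((w (s (tag b)))^-1)%g (tagged b).1, ((w (t (tag b)))^-1)%g (tagged b).2).

Lemma phiK : cancel phi phi'.
Proof. by case=> a [x y]; rewrite /phi /phi' /= !permK. Qed.
Lemma phi'K : cancel phi' phi.
Proof. by case=> a [x y]; rewrite /phi /phi' /= !permKV. Qed.
Lemma phi_inj : injective phi. Proof. exact: can_inj phiK. Qed.
Lemma phi'_inj : injective phi'. Proof. exact: can_inj phi'K. Qed.

Lemma tag_neq (i0 i : I) (x : 'I_(d i0)) (y : 'I_(d i)) : i0 != i ->
  (Tagged (fun i => 'I_(d i)) x == Tagged (fun i => 'I_(d i)) y) = false.
Proof.
move=> ne; apply/negbTE; apply: contra ne => /eqP H; apply/eqP.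
exact: (congr1 tag H).
Qed.

Lemma basis_pi i j (k : K) :
  basis R I d i j (Tagged (fun i => 'I_(d i)) (((w (tag k))^-1)%g (tagged k)))
  = basis R I d i (w i j) k.
Proof.
rewrite /basis; case: k => i0 j0 /=.
case: (eqVneq i0 i) => [E0|ne]; last by rewrite !tag_neq.
subst i0; rewrite !eq_Tagged /=.
have -> : (((w i)^-1)%g j0 == j) = (j0 == w i j).
  by apply/eqP/eqP => [<-|->]; rewrite ?permKV ?permK.
by [].
Qed.

Lemma wt_pi b k :
  wt b (Tagged (fun i => 'I_(d i)) (((w (tag k))^-1)%g (tagged k))) = wt (phi b) k.
Proof. by rewrite /wt !basis_pi. Qed.

Lemma tau_pi k :
  tau (Tagged (fun i => 'I_(d i)) (((w (tag k))^-1)%g (tagged k))) = tau k.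
Proof.
rewrite /tau_d; congr (_ / _); apply: eq_bigr => i _.
under eq_bigr do rewrite basis_pi.
by rewrite [RHS](reindex_inj (@perm_inj _ (w i))).
Qed.

Lemma weyl_sum (v : MR) (c : W -> R) c0 :
  (forall k, v k = \sum_(b : W) c b * wt b k + c0 * tau k) ->
  forall k, weyl_act R I d w v k = \sum_(b : W) c (phi' b) * wt b k + c0 * tau k.
Proof.
move=> Hv k; rewrite /weyl_act Hv tau_pi; congr (_ + _).
rewrite [RHS](reindex_inj phi_inj); apply: eq_bigr => b _.
by rewrite phiK wt_pi.
Qed.

Lemma Sr_weyl x r : Sr x r -> Sr (weyl_act R I d w x) r.
Proof.
move=> [r0 [v [[l [c [Hl Hv]]] Hx]]]; split => //.
exists (weyl_act R I d w v); split.
  exists (fun b => l (phi' b)), c; split => //; exact: weyl_sum.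
by move=> k; rewrite /weyl_act Hx.
Qed.

Lemma Pp_weyl r x n : Pp r x n -> Pp r (weyl_act R I d w x) n.
Proof.
move=> [cc [c0 [H1 H2 H3]]]; exists (fun b => cc (phi' b)), c0; split => //.
  exact: weyl_sum.
rewrite -H3 -(card_preimset [set b | cc b == - r] phi'_inj); apply: eq_card => b.
by rewrite !inE.
Qed.

End Weyl.

Lemma weyl_inv w x :
  weyl_act R I d (fun i => ((w i)^-1)%g) (weyl_act R I d w x) = x.
Proof.
apply: funext => k; rewrite /weyl_act /=.
by case: k => i j /=; rewrite invgK permK.
Qed.

Lemma weyl_rp w x :
  rinv (weyl_act R I d w x) = rinv x /\ pinv (weyl_act R I d w x) = pinv x.
Proof.
have ES : Sr (weyl_act R I d w x) = Sr x.
  apply: funext => r; apply: propext; split; last exact: Sr_weyl.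
  by move/(Sr_weyl (fun i => ((w i)^-1)%g)); rewrite weyl_inv.
have Hr : rinv (weyl_act R I d w x) = rinv x by rewrite !rinvE ES.
split => //; rewrite !pinvE Hr; apply: nat_min_ext => n; split; last exact: Pp_weyl.
by move/(Pp_weyl (fun i => ((w i)^-1)%g)); rewrite weyl_inv.
Qed.

End Proofs.

Theorem proposition3p1 (R : realType) (I E : finType) (s t : E -> I) (d : I -> nat)
  (Hsym : symmetric_quiver I E s t) (Hst : standing_assumption I E s t d) :
  (forall (chi chi' : MR R I d) (c : R),
     (forall k, chi' k = chi k + c * tau_d R I d k) ->
     r_inv R I E s t d chi = r_inv R I E s t d chi' /\
     p_inv R I E s t d chi = p_inv R I E s t d chi') /\
  (forall (chi : Kidx I d -> int) (w : forall i : I, {perm 'I_(d i)}) (delta : MR R I d),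
     weyl_invariant R I d delta ->
     let x : MR R I d := fun k => (chi k)%:~R + rho R I d k + delta k in
     let y : MR R I d := fun k => dot_act R I d w (fun k' => (chi k')%:~R) k + rho R I d k + delta k in
     r_inv R I E s t d x = r_inv R I E s t d y /\ p_inv R I E s t d x = p_inv R I E s t d y).
Proof.
split; first exact: part_a.
move=> chi w delta Hdel x y.
have -> : y = weyl_act R I d w x.
  apply: funext => k; rewrite /y /x /dot_act subrK -(Hdel w k).
  by [].
by case: (weyl_rp R I E s t d w x) => -> ->.
Qed.
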